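(* Let $\mathcal A$ be a weighted ODCA over $\mathbb F$, $K=|Q|\cdot|C|$, $c$ a configuration with counter value $n$, $V\subseteq\mathbb F^{|Q|}$ a subspace and $S\subseteq C$. If $z$ is a minimal witness for $(c,\overline V,S,\mathbb N)$, then every counter value occurring in the run of $z$ from $c$ is less than $\max(n,K)+K^2$.
   Context: Fix a field $\mathbb{F}$ and a finite alphabet $\Sigma$. For $n\in\mathbb N$ let $\mathrm{sgn}(n)=0$ if $n=0$ and $1$ if $n>0$. A weighted ODCA is $\mathcal{A}=((C,\delta_0,\delta_1,p_0),(Q,\lambda,\Delta,\eta))$ where $C$ is a finite nonempty set of counter states, $\delta_0:C\times\Sigma\to C\times\{0,+1\}$ and $\delta_1:C\times\Sigma\to C\times\{-1,0,+1\}$ are deterministic counter transition functions, $p_0\in C$, $Q$ is a finite nonempty set of states, $\lambda,\eta\in\mathbb{F}^{|Q|}$, and $\Delta:\Sigma\times\{0,1\}\to\mathbb{F}^{|Q|\times|Q|}$. A configuration is a triple $(x,p,n)\in\mathbb{F}^{|Q|}\times C\times\mathbb{N}$ (weight vector, counter state, counter value). Reading $a\in\Sigma$ from $(x,p,n)$ with $d=\mathrm{sgn}(n)$ and $\delta_d(p,a)=(p',e)$ leads to $(x\Delta(a,d),p',n+e)$; for each word $w$ and configuration $c$ there is a unique run of $w$ from $c$. For a subspace $V\subseteq\mathbb F^{|Q|}$ let $\overline V=\mathbb F^{|Q|}\setminus V$. For $S\subseteq C$ and $X\subseteq\mathbb N$, a word $z$ is a witness for $(c,\overline V,S,X)$ if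 the run of $z$ from $c$ ends in a configuration $(x,p,n)$ with $x\in\overline V$, $p\in S$, $n\in X$; it is a minimal witness if no strictly shorter word is a witness. *)

(* Defs.v *)
From HB Require Import structures.
From mathcomp Require Import all_boot all_order all_algebra.
Set Implicit Arguments. Unset Strict Implicit. Unset Printing Implicit Defensive.
Import GRing.Theory.
Local Open Scope ring_scope.

Inductive eff := Dec | Stay | Inc.

Definition apply_eff (e : eff) (n : nat) : nat :=
  match e with Dec => n.-1 | Stay => n | Inc => n.+1 end.

(* A weighted ODCA over field F and alphabet Sigma, counter states C
   (a nonempty finite type) and |Q| = q states (q > 0).
   delta0 has effects in {0,+1}: a boolean "increment" flag.
   delta1 has effects in {-1,0,+1}. Delta a d with d : bool (false = 0, true = 1). *)
Record ODCA (F : fieldType) (Sigma C : finType) (q : nat) := {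
  delta0 : C -> Sigma -> C * bool;
  delta1 : C -> Sigma -> C * eff;
  p0 : C;
  lam : 'rV[F]_q;
  Delta : Sigma -> bool -> 'M[F]_q;
  eta : 'rV[F]_q
}.

Definition config (F : fieldType) (C : finType) (q : nat) :=
  ('rV[F]_q * C * nat)%type.

Section Run.
Variables (F : fieldType) (Sigma C : finType) (q : nat) (A : ODCA F Sigma C q).

Definition step (c : config F C q) (a : Sigma) : config F C q :=
  let: (x, p, n) := c in
  if n == 0%N then
    let: (p', b) := delta0 A p a in (x *m Delta A a false, p', n + b)%N
  else
    let: (p', e) := delta1 A p a in (x *m Delta A a true, p', apply_eff e n).

Definition run (c : config F C q) (w : seq Sigma) : seq (config F C q) :=
  c :: scanl step c w.

Definition final (c : config F C q) (w : seq Sigma) : config F C q :=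
  foldl step c w.

Definition is_witness (c : config F C q) (V : {vspace 'rV[F]_q}) (S : {set C})
    (X : pred nat) (z : seq Sigma) : Prop :=
  let: (x, p, n) := final c z in [/\ x \notin V, p \in S & X n].

Definition is_minimal_witness (c : config F C q) (V : {vspace 'rV[F]_q})
    (S : {set C}) (X : pred nat) (z : seq Sigma) : Prop :=
  is_witness c V S X z /\
  forall z', (size z' < size z)%N -> ~ is_witness c V S X z'.

End Run.

(* Main.v *)
Require Import Defs.
From HB Require Import structures.
From mathcomp Require Import all_boot all_order all_algebra.
From mathcomp Require Import zify.
Set Implicit Arguments. Unset Strict Implicit. Unset Printing Implicit Defensive.
Import GRing.Theory.

Module Aux.
Local Open Scope ring_scope.


Lemma mx11_neq0 (F : fieldType) (y : 'M[F]_1) : y != 0 -> y 0 0 != 0.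
Proof.
apply: contra => /eqP y0; apply/eqP/matrixP => i j.
by rewrite !ord1 y0 mxE.
Qed.

Lemma core (F : fieldType) q m (a : nat -> 'rV[F]_q) (X : nat -> 'M[F]_q)
  (cc : nat -> 'cV[F]_q) (y : 'M[F]_1) :
  y != 0 -> (q * q <= m)%N ->
  (forall j, (j <= m)%N -> a j *m X j *m cc j = y) ->
  (forall j k, (j < k)%N -> (k <= m)%N -> a j *m X k *m cc j = 0) -> False.
Proof.
move=> y0 qm Hd Hs.
pose f i := cc (m - i)%N *m a (m - i)%N.
pose s := [seq f i | i <- iota 0 m.+1].
have nfree : ~~ free s.
  apply/negP => /eqP fr.
  have : (\dim <<s>> <= \dim (fullv : {vspace 'M[F]_q}))%N by apply: dimvS; apply: subvf.
  by rewrite fr dimvf dim_matrix size_map size_iota leqNgt ltnS qm.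
have := nfree; rewrite (freeNE (in_tuple s)) => /existsP[i].
have ilt : (i < m.+1)%N by have := ltn_ord i; move: (nat_of_ord i) => ii; rewrite /= size_map size_iota.
rewrite (nth_map 0%N) ?size_iota // nth_iota // add0n.
move=> inT.
pose k := (m - i)%N.
pose lam (H : 'M[F]_q) := \tr (X k *m H).
have lamG j : lam (cc j *m a j) = (a j *m X k *m cc j) 0 0.
  rewrite /lam mulmxA mxtrace_mulC /mxtrace big_ord1 mulmxA.
  by [].
have T0 v : v \in drop i.+1 s -> lam v = 0.
  rewrite /s -map_drop => /mapP[i' ].
  rewrite drop_iota mem_iota add0n => /andP[h1 h2] ->.
  rewrite /f lamG Hs ?mxE //; last exact: leq_subr.
  move: h1 h2 ilt; rewrite /k; move: (nat_of_ord i) => ii; lia.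
move: (drop i.+1 s) inT T0 => T inT T0.
have := @coord_span _ _ _ (in_tuple T) _ inT.
move: (coord (in_tuple T)) => co E.
have : lam (f i) = 0.
  rewrite E /lam mulmx_sumr linear_sum big1 // => j _.
  rewrite -scalemxAr linearZ /=; have := T0 _ (mem_nth 0 (ltn_ord j)); rewrite /lam => ->; by rewrite mulr0.
rewrite /f -/k lamG Hd ?leq_subr //.
by move/eqP; apply/negP; apply: mx11_neq0.
Qed.


Lemma projmx (F : fieldType) q (V : {vspace 'rV[F]_q}) : exists P : 'M[F]_q,
  forall v, (v *m P == 0) = (v \in V).
Proof.
exists (lin1_mx (\1 - projv V)%VF) => v.
rewrite mul_rV_lin1 /= lfunE /= lfunE /= lfunE /= subr_eq0.
apply/eqP/idP => [->|]; first exact: memv_proj.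
by move/projv_id.
Qed.


Lemma pigeon (T : finType) (g : nat -> T) N M : (#|T| * M < N)%N ->
  exists t, (M < count (fun r => g r == t) (iota 0 N))%N.
Proof.
move=> h; case: (pickP (fun t => M < count (fun r => g r == t) (iota 0 N)))%N => [t ht|hn].
  by exists t.
exfalso; move: h; apply/negP; rewrite -leqNgt.
have -> : N = (\sum_(r <- iota 0 N) 1)%N by rewrite sum1_size size_iota.
rewrite (partition_big g predT) //=.
rewrite -sum_nat_const; apply: leq_sum => t _.
by rewrite sum1_count leqNgt hn.
Qed.


Section Auto.
Variables (F : fieldType) (Sigma C : finType) (q : nat) (A : ODCA F Sigma C q).

Lemma step_shift x y p n d a : (d = 0 \/ d < n)%N ->
  step A (y, p, (n - d)%N) a =
    (y *m Delta A a (n != 0%N), (step A (x, p, n) a).1.2, ((step A (x, p, n) a).2 - d)%N)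
  /\ (step A (x, p, n) a).1.1 = x *m Delta A a (n != 0%N).
Proof.
rewrite /step => hd.
case: hd => [-> | hd]; first by rewrite subn0; case: eqP => _;
   [case: (delta0 A p a) | case: (delta1 A p a)] => ? ? /=; rewrite subn0.
have -> : (n - d == 0)%N = false by apply/eqP; lia.
have -> : (n == 0)%N = false by apply/eqP; lia.
case: (delta1 A p a) => p' [] /=; split => //; congr (_, _, _); lia.
Qed.

Lemma step_cnt x p n a : ((step A (x, p, n) a).2 <= n.+1)%N /\ (n <= (step A (x, p, n) a).2.+1)%N.
Proof.
rewrite /step; case: eqP => [->|_]; first by case: (delta0 A p a) => ? [] /=.
by case: (delta1 A p a) => ? [] /=; lia.
Qed.


Variables (c : config F C q) (z : seq Sigma).
Local Notation L := (size z).

Definition conf i := final A c (take i z).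
Definition xv i := (conf i).1.1.
Definition pst i := (conf i).1.2.
Definition cnt i := (conf i).2.

Lemma confE i : conf i = (xv i, pst i, cnt i).
Proof. by rewrite /xv /pst /cnt; case: (conf i) => [[]]. Qed.

Definition D i : 'M[F]_q :=
  if drop i z is a :: _ then Delta A a (cnt i != 0%N) else 1%:M.

Fixpoint Mseg u len : 'M[F]_q :=
  if len is l.+1 then Mseg u l *m D (u + l) else 1%:M.

Lemma conf_step i : (i < L)%N -> exists a,
  [/\ take i.+1 z = rcons (take i z) a, conf i.+1 = step A (conf i) a
    & D i = Delta A a (cnt i != 0%N)].
Proof.
move=> iL; case Hd: (drop i z) => [|a s].
  by move: (size_drop i z); rewrite Hd /=; lia.
exists a; rewrite /D Hd.
have Hz : z = take i z ++ a :: s by rewrite -Hd cat_take_drop.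
have Ht : take i.+1 z = rcons (take i z) a.
  rewrite {1}Hz take_cat size_take iL ltnNge leqnSn /= subSnn /= take0 cats1 //.
split => //.
by rewrite /conf /final Ht -cats1 foldl_cat.
Qed.

Lemma cnt_step i : (i < L)%N -> (cnt i.+1 <= (cnt i).+1)%N /\ (cnt i <= (cnt i.+1).+1)%N.
Proof.
move=> /conf_step[a [_ E _]].
by rewrite /cnt E confE; apply: step_cnt.
Qed.

Lemma shift u len d x : (u + len <= L)%N ->
  (d = 0 \/ forall k, (u <= k < u + len)%N -> d < cnt k)%N ->
  final A (x, pst u, (cnt u - d)%N) (drop u (take (u + len) z)) =
    (x *m Mseg u len, pst (u + len), (cnt (u + len) - d)%N).
Proof.
elim: len => [|len IH] hl hd.
  by rewrite addn0 /= mulmx1 drop_oversize // size_take; case: ifP => //; lia.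
have hl' : (u + len < L)%N by lia.
have [a [Ht Ec ED]] := conf_step hl'.
have IH' := IH (ltnW hl') (ltac:(by case: hd => [->|hd]; [left | right => k hk; apply: hd; lia])).
rewrite /final in IH'.
rewrite addnS Ht drop_rcons ?size_take ?hl' ?leq_addr // -cats1 /final foldl_cat IH'.
have -> : forall s0, foldl (step A) s0 [:: a] = step A s0 a by [].
rewrite [Mseg u len.+1]/= ED.
have hd' : (d = 0 \/ d < cnt (u + len))%N.
  by case: hd => [->|hd]; [left | right; apply: hd; lia].
have [E1 E2] := step_shift (xv (u + len)) (x *m Mseg u len) (pst (u + len)) a hd'.
rewrite E1 /xv /pst /cnt Ec confE mulmxA.
by rewrite -/(xv _) -/(pst _) -/(cnt _).
Qed.

Lemma conf_comp u len : (u + len <= L)%N ->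
  final A (conf u) (drop u (take (u + len) z)) = conf (u + len).
Proof.
move=> hl; rewrite /conf /final -foldl_cat.
congr foldl; rewrite -{2}(cat_take_drop u (take (u + len) z)) take_takel //; lia.
Qed.

Lemma xv_comp u len : (u + len <= L)%N -> xv (u + len) = xv u *m Mseg u len.
Proof.
move=> hl; have H := shift (d := 0) (xv u) hl (or_introl erefl).
rewrite !subn0 -confE conf_comp // in H.
by rewrite {1}/xv H.
Qed.


Lemma surgery a b b' a' : (a < b)%N -> (b <= b')%N -> (b' <= a')%N -> (a' <= L)%N ->
  pst a = pst b -> pst b' = pst a' -> (cnt a <= cnt b)%N ->
  (forall k, (b <= k < b')%N -> (cnt b - cnt a < cnt k)%N) ->
  ((cnt b' - (cnt b - cnt a))%N = cnt a' \/ a' = L) ->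
  [/\ (size (take a z ++ drop b (take b' z) ++ drop a' z) < L)%N,
      (final A c (take a z ++ drop b (take b' z) ++ drop a' z)).1.1
        = xv a *m Mseg b (b' - b) *m Mseg a' (L - a')
    & (final A c (take a z ++ drop b (take b' z) ++ drop a' z)).1.2 = pst L].
Proof.
move=> hab hbb hba haL pa pb hc hk hend.
suff [n' ->] : exists n', final A c (take a z ++ drop b (take b' z) ++ drop a' z) =
   (xv a *m Mseg b (b' - b) *m Mseg a' (L - a'), pst L, n').
  by split => //; rewrite !size_cat !size_drop !size_takel; lia.
set d := (cnt b - cnt a)%N.
have Ea : conf a = (xv a, pst b, (cnt b - d)%N).
  by rewrite confE pa /d; congr (_, _, _); lia.
have Hm := shift (u := b) (len := b' - b) (d := d) (xv a) (ltac:(lia)) (or_intror (fun k (hk0 : (b <= k < b + (b' - b))%N) => hk k ltac:(lia))).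
rewrite subnKC // in Hm.
rewrite /final !foldl_cat -/(final A c (take a z)) -/(conf a) Ea.
rewrite /final in Hm; rewrite Hm.
case: hend => [hc' | Ha'].
  rewrite hc' pb.
  have Hs := shift (u := a') (len := L - a') (d := 0)
     (xv a *m Mseg b (b' - b)) (ltac:(lia)) (or_introl erefl).
  rewrite !subn0 subnKC // take_size in Hs.
  by rewrite /final in Hs; rewrite Hs; eexists.
by rewrite pb Ha' drop_size subnn /= mulmx1; eexists.
Qed.

Lemma run_conf cfg : cfg \in run A c z -> exists2 i, (i <= L)%N & cfg = conf i.
Proof.
move=> /(nthP c) [i]; rewrite /run /= ltnS size_scanl => iL <-.
by exists i => //; rewrite nth_cons_scanl.
Qed.


Section Levels.
Variable i : nat.
Hypothesis iL : (i <= L)%N.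

Definition tl l := (i - find (fun k => cnt (i - k) <= l) (iota 0 i.+1))%N.
Definition sl l := (i + find (fun k => cnt (i + k) <= l) (iota 0 (L - i)))%N.

Section OneLevel.
Variable l : nat.
Hypothesis l0 : (cnt 0 <= l)%N.
Hypothesis li : (l <= cnt i)%N.

Let f := find (fun k => cnt (i - k) <= l)%N (iota 0 i.+1).
Let hasf : has (fun k => cnt (i - k) <= l)%N (iota 0 i.+1).
Proof. by apply/hasP; exists i; rewrite ?mem_iota //= subnn. Qed.
Let flt : (f < i.+1)%N.
Proof. by move: hasf; rewrite has_find size_iota. Qed.

Lemma tl_le : (tl l <= i)%N. Proof. exact: leq_subr. Qed.

Lemma tl_cnt : (cnt (tl l) <= l)%N.
Proof. by have := nth_find 0%N hasf; rewrite nth_iota. Qed.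

Lemma tl_after u : (tl l < u <= i)%N -> (l < cnt u)%N.
Proof.
move=> /andP[h1 h2].
have hk : (i - u < f)%N by move: h1; rewrite /tl -/f; lia.
have := before_find 0%N hk; rewrite nth_iota ?add0n; last lia.
by rewrite subKn // => /negbT; rewrite -ltnNge.
Qed.

Lemma tl_eq : cnt (tl l) = l.
Proof.
apply/eqP; rewrite eqn_leq tl_cnt /=.
have [E|lt] := eqVneq (tl l) i; first by rewrite E.
have lt' : (tl l < i)%N by rewrite ltn_neqAle lt tl_le.
have := tl_after (u := (tl l).+1); rewrite ltnSn lt' => /(_ isT).
have [h _] := cnt_step (leq_trans lt' iL); lia.
Qed.

Let g := find (fun k => cnt (i + k) <= l)%N (iota 0 (L - i)).

Lemma sl_ge : (i <= sl l)%N. Proof. exact: leq_addr. Qed.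
Lemma sl_le : (sl l <= L)%N.
Proof. have := find_size (fun k => cnt (i + k) <= l)%N (iota 0 (L - i)); rewrite size_iota /sl; lia. Qed.

Lemma sl_before u : (i <= u < sl l)%N -> (l < cnt u)%N.
Proof.
move=> /andP[h1 h2].
have hk : (u - i < g)%N by move: h2; rewrite /sl -/g; lia.
have := before_find 0%N hk; rewrite nth_iota ?add0n; last first.
  have := find_size (fun k => cnt (i + k) <= l)%N (iota 0 (L - i)); rewrite size_iota -/g; lia.
by rewrite subnKC // => /negbT; rewrite -ltnNge.
Qed.

Lemma sl_cnt : (sl l < L)%N -> cnt (sl l) = l.
Proof.
move=> hs; apply/eqP; rewrite eqn_leq.
have hg : has (fun k => cnt (i + k) <= l)%N (iota 0 (L - i)).
  by rewrite has_find size_iota; move: hs; rewrite /sl -/g; lia.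
have := nth_find 0%N hg; rewrite nth_iota -/g; last by move: hs; rewrite /sl; lia.
rewrite add0n -/(sl l) => -> /=.
have [E|lt] := eqVneq (sl l) i; first by rewrite E.
have lt' : (i < sl l)%N by rewrite ltn_neqAle eq_sym lt sl_ge.
have := sl_before (u := (sl l).-1); rewrite (ltn_predK lt') leqnn.
have -> : (i <= (sl l).-1)%N by lia.
move=> /(_ isT).
have [_ h] := @cnt_step ((sl l).-1) (ltac:(lia) : ((sl l).-1 < L)%N); rewrite (ltn_predK lt') in h.
lia.
Qed.

Lemma mid_ge u : (tl l <= u < sl l)%N -> (l <= cnt u)%N.
Proof.
move=> /andP[h1 h2].
have [E|ne] := eqVneq u (tl l); first by rewrite E tl_eq.
have [hu|hu] := leqP u i.
  by apply: ltnW; apply: tl_after; rewrite hu andbT ltn_neqAle eq_sym ne.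
by apply: ltnW; apply: sl_before; rewrite h2 andbT ltnW.
Qed.

End OneLevel.

Section TwoLevels.
Variables l l' : nat.
Hypothesis l0 : (cnt 0 <= l)%N.
Hypothesis ll : (l < l')%N.
Hypothesis li : (l' <= cnt i)%N.

Lemma tl_lt : (tl l < tl l')%N.
Proof.
have l0' : (cnt 0 <= l')%N by lia.
have li' : (l <= cnt i)%N by lia.
rewrite ltn_neqAle; apply/andP; split.
  by apply/eqP => E; move: (tl_eq l0 li') (tl_eq l0' li); rewrite E => ->; lia.
rewrite leqNgt; apply/negP => h.
have := tl_after l0' li (u := tl l); rewrite h tl_le // (tl_eq l0 li') => /(_ isT).
lia.
Qed.

Lemma sl_mono : (sl l' <= sl l)%N.
Proof.
have l0' : (cnt 0 <= l')%N by lia.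
have li' : (l <= cnt i)%N by lia.
have [hs|hs] := ltnP (sl l) L; last by apply: leq_trans hs; apply: sl_le.
rewrite leqNgt; apply/negP => h.
have := sl_before l0' li (u := sl l); rewrite h sl_ge // (sl_cnt l0 li' hs) => /(_ isT).
lia.
Qed.

Lemma sl_end : ((cnt (sl l') - (l' - l))%N = cnt (sl l) \/ sl l = L).
Proof.
have l0' : (cnt 0 <= l')%N by lia.
have li' : (l <= cnt i)%N by lia.
have [hs|hs] := ltnP (sl l) L; last by right; apply/eqP; rewrite eqn_leq hs sl_le.
left; rewrite (sl_cnt l0 li' hs) (sl_cnt l0' li) //; first lia.
exact: leq_ltn_trans sl_mono hs.
Qed.

End TwoLevels.
End Levels.

End Auto.

End Aux.
Import Aux.
Local Open Scope ring_scope.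

Theorem mainTheorem13 (F : fieldType) (Sigma C : finType) (q : nat)
  (A : ODCA F Sigma C q) (c : config F C q)
  (V : {vspace 'rV[F]_q}) (S : {set C}) (z : seq Sigma) :
  (0 < q)%N ->
  let K := (q * #|C|)%N in
  is_minimal_witness A c V S predT z ->
  forall cfg, cfg \in run A c z -> (cfg.2 < maxn c.2 K + K ^ 2)%N.
Proof.
move=> q0 K [wit minim] cfg /run_conf [i iL ->].
rewrite ltnNge; apply/negP => hi.
have c0 : cnt A c z 0 = c.2 by rewrite /cnt /conf take0.
have Kpos : (0 < K)%N.
  by rewrite /K muln_gt0 q0 /=; apply/card_gt0P; exists (p0 A).
set base := maxn c.2 K in hi.
have hi' : (base + K ^ 2 <= cnt A c z i)%N by [].
have [xL pL] : xv A c z (size z) \notin V /\ pst A c z (size z) \in S.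
  move: wit; rewrite /is_witness -[X in final A c X](take_size z) -/(conf A c z _) confE.
  by case.
have minV z' : (size z' < size z)%N -> (final A c z').1.2 = pst A c z (size z) ->
    (final A c z').1.1 \in V.
  move=> hs hp; apply/negPn/negP => hv; apply: (minim z' hs).
  rewrite /is_witness; move: hp hv; case: (final A c z') => [[x p] n] /= -> hv.
  by split.
have [P HP] := projmx V.
have [j0 hj0] : exists j0, (xv A c z (size z) *m P) 0 j0 != 0.
  apply/existsP; move: xL; rewrite -HP; apply: contraR => /existsPn h.
  by apply/eqP/rowP => j; rewrite [RHS]mxE; apply/eqP; rewrite -[_ == _]negbK h.
pose gnat r : C * C := (pst A c z (tl A c z i (base + r)), pst A c z (sl A c z i (base + r))).
have [t0 ht0] := @pigeon _ gnat (K ^ 2).+1 (q * q) (ltac:(rewrite card_prod /K; nia)).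
set s := [seq r <- iota 0 (K ^ 2).+1 | gnat r == t0].
have ssz : (q * q < size s)%N by rewrite size_filter.
have ssort : sorted ltn s.
  by apply: sorted_filter; [exact: ltn_trans | exact: iota_ltn_sorted].
have smem j : (j < size s)%N -> (nth 0%N s j <= K ^ 2)%N /\ gnat (nth 0%N s j) = t0.
  move=> hj; have := mem_nth 0%N hj; rewrite mem_filter mem_iota => /andP[/eqP E /andP[_ h]].
  by split => //; move: h; rewrite add0n ltnS.
pose lev j := (base + nth 0%N s j)%N.
have hl0 j : (cnt A c z 0 <= lev j)%N by rewrite c0 /lev /base; lia.
have hl1 j : (0 < lev j)%N by rewrite /lev /base; lia.
have hli j : (j <= q * q)%N -> (lev j <= cnt A c z i)%N.
  move=> hj; have [h _] := smem j (leq_ltn_trans hj ssz); rewrite /lev; lia.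
have hlt j k : (j < k)%N -> (k <= q * q)%N -> (lev j < lev k)%N.
  move=> hjk hk; rewrite /lev ltn_add2l.
  apply: (sorted_ltn_nth ltn_trans 0%N ssort) => //; rewrite inE; lia.
have hg j : (j <= q * q)%N -> gnat (nth 0%N s j) = t0.
  by move=> hj; have [_ h] := smem j (leq_ltn_trans hj ssz).
have hpt j : (j <= q * q)%N -> pst A c z (tl A c z i (lev j)) = t0.1.
  by move=> hj; rewrite -(hg j hj).
have hps j : (j <= q * q)%N -> pst A c z (sl A c z i (lev j)) = t0.2.
  by move=> hj; rewrite -(hg j hj).
pose t j := tl A c z i (lev j).
pose u j := sl A c z i (lev j).
apply: (@core F q (q * q) (fun j => xv A c z (t j))
   (fun j => Mseg A c z (t j) (u j - t j))
   (fun j => Mseg A c z (u j) (size z - u j) *m P *m delta_mx j0 0)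
   (xv A c z (size z) *m P *m delta_mx j0 0)).
- rewrite -colE; apply/eqP => /matrixP /(_ 0 0); rewrite [LHS]mxE [RHS]mxE => E; by rewrite E eqxx in hj0.
- exact: leqnn.
- move=> j hj /=.
  have htu : (t j <= u j)%N.
    by apply: leq_trans (tl_le A c z i _) (sl_ge A c z i _).
  have huL : (u j <= size z)%N by exact: (sl_le iL (hl0 j) (hli j hj)).
  have E1 := @xv_comp _ _ _ _ A c z (t j) (u j - t j) (ltac:(lia)).
  have E2 := @xv_comp _ _ _ _ A c z (u j) (size z - u j) (ltac:(lia)).
  rewrite subnKC // in E1; rewrite subnKC // in E2.
  by rewrite !mulmxA -E1 -E2.
- move=> j k hjk hk.
  have hj : (j <= q * q)%N by lia.
  have ejk1 : (cnt A c z (t j) <= cnt A c z (t k))%N.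
    by rewrite /t (tl_eq iL (hl0 j) (hli j hj)) (tl_eq iL (hl0 k) (hli k hk)) ltnW // hlt.
  have ejk2 : forall k', (t k <= k' < u k)%N ->
      (cnt A c z (t k) - cnt A c z (t j) < cnt A c z k')%N.
    move=> k' hk'.
    have := mid_ge iL (hl0 k) (hli k hk) hk'.
    rewrite /t (tl_eq iL (hl0 j) (hli j hj)) (tl_eq iL (hl0 k) (hli k hk)).
    move=> h2; have h3 := hlt j k hjk hk; have h6 := hl1 j; move: h2 h3 h6; move: (lev k) (lev j) (cnt A c z k') => x y w h4 h5 h6; lia.
  have ejk3 : ((cnt A c z (u k) - (cnt A c z (t k) - cnt A c z (t j)))%N = cnt A c z (u j)
      \/ u j = size z).
    rewrite /t (tl_eq iL (hl0 j) (hli j hj)) (tl_eq iL (hl0 k) (hli k hk)).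
    exact: (sl_end iL (hl0 j) (hlt j k hjk hk) (hli k hk)).
  have [hs Hv Hp] := @surgery _ _ _ _ A c z (t j) (t k) (u k) (u j)
     (tl_lt iL (hl0 j) (hlt j k hjk hk) (hli k hk))
     (leq_trans (tl_le A c z i _) (sl_ge A c z i _))
     (sl_mono iL (hl0 j) (hlt j k hjk hk) (hli k hk))
     (sl_le iL (hl0 j) (hli j hj))
     (etrans (hpt j hj) (esym (hpt k hk)))
     (etrans (hps k hk) (esym (hps j hj)))
     ejk1 ejk2 ejk3.
  have := minV _ hs Hp; rewrite Hv -HP => /eqP H0.
  by rewrite !mulmxA H0 !mul0mx.
Qed.
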